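(* Let $V\subseteq\mathbb{K}[z_1,\ldots,z_n]$ be a $\mathbb{K}$-linear subspace, where $\mathbb{K}=\mathbb{R}$ or $\mathbb{C}$. (i) If $\mathbb{K}=\mathbb{R}$ and every non-zero element of $V$ is real stable, then $\dim V\le 2$. (ii) If $\mathbb{K}=\mathbb{C}$ and every non-zero element of $V$ is stable, then $\dim V\le1$.
   Context: $H=\{z\in\mathbb{C}:\Im(z)>0\}$; a polynomial is stable if it is non-zero whenever all variables lie in $H$; real stable means stable with real coefficients. *)

(* Defs.v *)
From HB Require Import structures.
From mathcomp Require Import all_boot all_order all_algebra.
From mathcomp Require Import mpoly.
From mathcomp Require Import complex.
From mathcomp Require Import reals.
Set Implicit Arguments. Unset Strict Implicit. Unset Printing Implicit Defensive.
Import Order.TTheory GRing.Theory Num.Theory.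
Local Open Scope ring_scope.

Definition stable (R : rcfType) (n : nat) (p : {mpoly R[i][n]}) : Prop :=
  forall z : 'I_n -> R[i], (forall i, 0 < Im (z i)) -> p.@[z] != 0.

Definition real_stable (R : rcfType) (n : nat) (p : {mpoly R[n]}) : Prop :=
  stable (map_mpoly (fun x : R => x%:C%C) p).

Definition is_subspace (K : pzRingType) (M : lmodType K) (V : M -> Prop) : Prop :=
  V 0 /\ forall (a : K) (u v : M), V u -> V v -> V (a *: u + v).

Definition lin_indep (K : pzRingType) (M : lmodType K) (k : nat) (f : 'I_k -> M) : Prop :=
  forall c : 'I_k -> K, \sum_(i < k) c i *: f i = 0 -> forall i, c i = 0.

Definition dim_le (K : pzRingType) (M : lmodType K) (V : M -> Prop) (d : nat) : Prop :=
  forall (k : nat) (f : 'I_k -> M), (forall i, V (f i)) -> lin_indep f -> (k <= d)%N.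

(* Main.v *)
Require Import Defs.
From HB Require Import structures.
From mathcomp Require Import all_boot all_order all_algebra.
From mathcomp Require Import mpoly.
From mathcomp Require Import complex.
From mathcomp Require Import reals.
From mathcomp Require Import ring lra.
Import Order.TTheory GRing.Theory Num.Theory.
Local Open Scope ring_scope.

Section Helpers.

Lemma comb2 (K : pzRingType) (M : lmodType K) (k : nat) (f : 'I_k.+2 -> M) :
  lin_indep f -> forall a b : K,
  a *: f ord0 + b *: f (lift ord0 ord0) = 0 -> a = 0 /\ b = 0.
Proof.
move=> hind a b hab.
pose g (i : 'I_k.+2) : K := if val i == 0%N then a else if val i == 1%N then b else 0.
have hs : \sum_(i < k.+2) g i *: f i = 0.
  rewrite big_ord_recl big_ord_recl big1 ?addr0; first by rewrite /g /=.
  by move=> i _; rewrite /g /= scale0r.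
split; [exact: (hind g hs ord0) | exact: (hind g hs (lift ord0 ord0))].
Qed.

Lemma comb3 (K : pzRingType) (M : lmodType K) (k : nat) (f : 'I_k.+3 -> M) :
  lin_indep f -> forall a b c : K,
  a *: f ord0 + b *: f (lift ord0 ord0) + c *: f (lift ord0 (lift ord0 ord0)) = 0 ->
  [/\ a = 0, b = 0 & c = 0].
Proof.
move=> hind a b c habc.
pose g (i : 'I_k.+3) : K := if val i == 0%N then a else if val i == 1%N then b
  else if val i == 2%N then c else 0.
have hs : \sum_(i < k.+3) g i *: f i = 0.
  rewrite big_ord_recl big_ord_recl big_ord_recl big1 ?addr0.
    by rewrite /g /= addrA.
  by move=> i _; rewrite /g /= scale0r.
split; [exact: (hind g hs ord0) | exact: (hind g hs (lift ord0 ord0))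
       | exact: (hind g hs (lift ord0 (lift ord0 ord0)))].
Qed.

Lemma ev (R : realType) (n : nat) (z : 'I_n -> R[i]) (a : R) (u v : {mpoly R[n]}) :
  (map_mpoly (fun x : R => x%:C%C) (a *: u + v)).@[z] =
  a%:C%C * (map_mpoly (fun x : R => x%:C%C) u).@[z] + (map_mpoly (fun x : R => x%:C%C) v).@[z].
Proof. by rewrite raddfD /= map_mpolyZ mevalD mevalZ. Qed.

Lemma evZ (R : realType) (n : nat) (z : 'I_n -> R[i]) (a : R) (u : {mpoly R[n]}) :
  (map_mpoly (fun x : R => x%:C%C) (a *: u)).@[z] =
  a%:C%C * (map_mpoly (fun x : R => x%:C%C) u).@[z].
Proof. by rewrite map_mpolyZ mevalZ. Qed.

Lemma ev3 (R : realType) (n : nat) (z : 'I_n -> R[i]) (a b c : R) (u v w : {mpoly R[n]}) :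
  (map_mpoly (fun x : R => x%:C%C) (a *: u + (b *: v + c *: w))).@[z] =
  a%:C%C * (map_mpoly (fun x : R => x%:C%C) u).@[z] +
  (b%:C%C * (map_mpoly (fun x : R => x%:C%C) v).@[z] +
   c%:C%C * (map_mpoly (fun x : R => x%:C%C) w).@[z]).
Proof.
have e1 := @ev R n z a u (b *: v + c *: w).
have e2 := @ev R n z b v (c *: w).
have e3 := @evZ R n z c w.
apply: (etrans e1); apply: congr1; apply: (etrans e2); apply: congr1; exact: e3.
Qed.

Lemma alg3 (R : rcfType) (P Q S : R[i]) :
  (forall a b c : R, ~ [/\ a = 0, b = 0 & c = 0] ->
      a%:C%C * P + (b%:C%C * Q + c%:C%C * S) != 0) -> False.
Proof.
case: P => P1 P2; case: Q => Q1 Q2; case: S => S1 S2 key.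
have hQ := key 0 1 0 ltac:(by case => _ /eqP; rewrite oner_eq0).
have hQn : Q1 * Q1 + Q2 * Q2 != 0.
  apply/negP => /eqP h; move: hQ; rewrite /real_complex_def; simpc.
  have h1 : Q1 = 0 by apply/eqP; rewrite -sqrf_eq0 expr2; apply/eqP; nra.
  have h2 : Q2 = 0 by apply/eqP; rewrite -sqrf_eq0 expr2; apply/eqP; nra.
  rewrite h1 h2 => /negP; apply; rewrite eq_complex /=; apply/andP; split; by [].
case: (eqVneq (P1 * Q2 - P2 * Q1) 0) => hd.
- have hn : ~ [/\ Q1 * Q1 + Q2 * Q2 = 0, - (P1 * Q1 + P2 * Q2) = 0 & (0:R) = 0].
    by case => /eqP; rewrite (negbTE hQn).
  apply: (negP (key _ _ _ hn)).
  rewrite /real_complex_def; simpc; rewrite eq_complex /=.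
  apply/andP; split; apply/eqP.
  + transitivity ((P1 * Q2 - P2 * Q1) * Q2); first ring.
    by rewrite hd mul0r.
  + transitivity ((P1 * Q2 - P2 * Q1) * (- Q1)); first ring.
    by rewrite hd mul0r.
- have hn : ~ [/\ Q1 * S2 - Q2 * S1 = 0, S1 * P2 - S2 * P1 = 0 & P1 * Q2 - P2 * Q1 = 0].
    by case => _ _ /eqP; rewrite (negbTE hd).
  apply: (negP (key _ _ _ hn)).
  rewrite /real_complex_def; simpc; rewrite eq_complex /=.
  by apply/andP; split; apply/eqP; ring.
Qed.

End Helpers.

Theorem lemma3p2 :
  (forall (R : realType) (n : nat) (V : {mpoly R[n]} -> Prop),
      is_subspace V ->
      (forall p, V p -> p != 0 -> real_stable p) ->
      dim_le V 2)
  /\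
  (forall (R : realType) (n : nat) (V : {mpoly R[i][n]} -> Prop),
      is_subspace V ->
      (forall p, V p -> p != 0 -> stable p) ->
      dim_le V 1).
Proof.
split.
- move=> R n V [V0 VS] hst k f hVf hind.
  case: (leqP k 2) => // hk.
  exfalso.
  case: k f hVf hind hk => [|[|[|k]]] // f hVf hind _.
  set z0 : 'I_n -> R[i] := fun _ => 'i%C.
  have hi : 0 < 'Im ('i%C : R[i]) by rewrite Im_i ltr01.
  have hz0 : forall i, 0 < 'Im (z0 i) by move=> i; exact: hi.
  set E := fun p : {mpoly R[n]} => (map_mpoly (fun x : R => x%:C%C) p).@[z0].
  set f0 := f ord0. set f1 := f (lift ord0 ord0). set f2 := f (lift ord0 (lift ord0 ord0)).
  have key : forall a b c : R, ~ [/\ a = 0, b = 0 & c = 0] ->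
      a%:C%C * E f0 + (b%:C%C * E f1 + c%:C%C * E f2) != 0.
    move=> a b c habc.
    have V2 : V (c *: f2) by have := VS c f2 0 (hVf _) V0; rewrite addr0.
    have Vu : V (a *: f0 + (b *: f1 + c *: f2)).
      by apply: (VS); first exact: hVf; apply: (VS); first exact: hVf.
    have nz : a *: f0 + (b *: f1 + c *: f2) != 0.
      apply/negP => /eqP h; apply: habc; apply: (@comb3 _ _ _ f hind a b c).
      by move: h; rewrite addrA.
    have := hst _ Vu nz z0 hz0.
    move=> h; exact: (eq_ind _ (fun t => t != 0) h _ (@ev3 R n z0 a b c f0 f1 f2)).
  exact: (@alg3 R (E f0) (E f1) (E f2) key).
- move=> R n V [V0 VS] hst k f hVf hind.
  case: (leqP k 1) => // hk.
  exfalso.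
  case: k f hVf hind hk => [|[|k]] // f hVf hind _.
  set z0 : 'I_n -> R[i] := fun _ => 'i%C.
  have hi : 0 < 'Im ('i%C : R[i]) by rewrite Im_i ltr01.
  have hz0 : forall i, 0 < 'Im (z0 i) by move=> i; exact: hi.
  set f0 := f ord0. set f1 := f (lift ord0 ord0).
  have nz1 : f1 != 0.
    apply/negP => /eqP h.
    have [_] := @comb2 _ _ _ f hind 0 1 ltac:(by rewrite scale0r add0r scale1r; exact h).
    by move/eqP; rewrite oner_eq0.
  have hQ := hst _ (hVf _) nz1 z0 hz0.
  set c := - (f0.@[z0] / f1.@[z0]).
  have Vu : V (c *: f1 + f0) := VS c f1 f0 (hVf _) (hVf _).
  have nz : c *: f1 + f0 != 0.
    apply/negP => /eqP h.
    have [h1 _] := @comb2 _ _ _ f hind 1 c ltac:(by rewrite scale1r addrC; exact h).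
    by move/eqP: h1; rewrite oner_eq0.
  have := hst _ Vu nz z0 hz0.
  rewrite mevalD mevalZ /c mulNr divfK // addNr.
  by rewrite eqxx.
Qed.
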